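(* For every real number $r\ge 1$, the function $f_r:[0,1]\to\mathbb{R}$, \[ f_r(x)=\sum_{m\in\mathbb{Z}}\left|\frac{\sin(\pi(x+m))}{\pi(x+m)}\right|^{2r}, \] attains a global minimum on $[0,1]$ at $x=\tfrac12$; that is, $f_r(x)\ge f_r(\tfrac12)$ for all $x\in[0,1]$.
   Context: The summand $\frac{\sin(\pi y)}{\pi y}$ is interpreted as $1$ when $y=0$. The series converges absolutely for every $x\in\mathbb{R}$ and every $r\ge1$. *)

(* Defs.v *)
From Stdlib Require Import Reals.
From Coquelicot Require Import Coquelicot.
Open Scope R_scope.

Definition sinc (y : R) : R :=
  if Req_EM_T y 0 then 1 else sin (PI * y) / (PI * y).

(* a ^ p for a >= 0 and real p > 0, with the convention 0 ^ p = 0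
   (Stdlib's Rpower 0 p would give 1). *)
Definition rpow (a p : R) : R :=
  if Req_EM_T a 0 then 0 else Rpower a p.

Definition term (r y : R) : R := rpow (Rabs (sinc y)) (2 * r).

(* sum over m in Z, split as m >= 0 and m <= -1 (absolutely convergent) *)
Definition f_r (r x : R) : R :=
  Series (fun n : nat => term r (x + INR n))
  + Series (fun n : nat => term r (x - INR (S n))).

(* Main.v *)
Require Import Defs.
From Stdlib Require Import Reals Lra Lia Arith.
From Coquelicot Require Import Coquelicot.
Open Scope R_scope.

Fixpoint ps (a : nat -> R) (N : nat) : R :=
  match N with O => 0 | S n => ps a n + a n end.

Lemma sum_n_ps a N : sum_n a N = ps a (S N).
Proof.
  induction N.
  - rewrite sum_O. simpl. symmetry. apply Rplus_0_l.
  - rewrite sum_Sn, IHN. reflexivity.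
Qed.

Lemma ps_lim a : ex_series a -> is_lim_seq (ps a) (Series a).
Proof.
  intro H. apply is_lim_seq_incr_1.
  apply (is_lim_seq_ext (sum_n a)). { intro n. apply sum_n_ps. }
  exact (Series_correct _ H).
Qed.

Lemma ps_ext a b N : (forall n, a n = b n) -> ps a N = ps b N.
Proof. intro H. induction N; simpl; [ring| rewrite IHN, H; ring]. Qed.

Lemma ps_le a b N : (forall n, a n <= b n) -> ps a N <= ps b N.
Proof. intro H. induction N; simpl; [lra| specialize (H N); lra]. Qed.

Lemma ps_nonneg a N : (forall n, 0 <= a n) -> 0 <= ps a N.
Proof. intro H. induction N; simpl; [lra| specialize (H N); lra]. Qed.

Lemma ps_mono a N M : (forall n, 0 <= a n) -> (N <= M)%nat -> ps a N <= ps a M.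
Proof.
  intros H HNM. induction HNM; [lra|]. simpl. specialize (H m). lra.
Qed.

Lemma ps_plus a b N : ps (fun n => a n + b n) N = ps a N + ps b N.
Proof. induction N; simpl; [ring| rewrite IHN; ring]. Qed.

Lemma ps_scal c a N : ps (fun n => c * a n) N = c * ps a N.
Proof. induction N; simpl; [ring| rewrite IHN; ring]. Qed.

Lemma ex_series_bound a M : (forall n, 0 <= a n) -> (forall N, ps a N <= M) -> ex_series a.
Proof.
  intros H0 HM.
  assert (E : ex_finite_lim_seq (sum_n a)).
  { apply ex_finite_lim_seq_incr with M.
    - intro n. rewrite !sum_n_ps. simpl. specialize (H0 (S n)). lra.
    - intro n. rewrite sum_n_ps. apply HM. }
  destruct E as [l Hl]. exists l. exact Hl.
Qed.

Lemma Series_bound a M : ex_series a -> (forall N, ps a N <= M) -> Series a <= M.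
Proof.
  intros H HM.
  assert (L := is_lim_seq_le (ps a) (fun _ => M) (Series a) M HM (ps_lim a H) (is_lim_seq_const M)).
  simpl in L. exact L.
Qed.

Lemma Series_ge_ps a N : (forall n, 0 <= a n) -> ex_series a -> ps a N <= Series a.
Proof.
  intros H0 H.
  assert (L1 : is_lim_seq (fun n => ps a (n + N)) (Series a)).
  { apply (is_lim_seq_incr_n (ps a) N). apply ps_lim; auto. }
  assert (L := is_lim_seq_le (fun _ => ps a N) (fun n => ps a (n + N)) (ps a N) (Series a)
     (fun n => ps_mono a N (n + N) H0 ltac:(lia)) (is_lim_seq_const _) L1).
  simpl in L. exact L.
Qed.

Lemma ex_series_cmp a b : (forall n, 0 <= a n <= b n) -> ex_series b -> ex_series a.
Proof.
  intros H Hb. apply ex_series_bound with (Series b).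
  - intro n. apply H.
  - intro N. apply Rle_trans with (ps b N).
    + apply ps_le. intro n. apply H.
    + apply Series_ge_ps; auto. intro n. specialize (H n). lra.
Qed.

Lemma Series_even_odd u : ex_series u -> ex_series (fun n => u (2*n)%nat) ->
  ex_series (fun n => u (S (2*n))) ->
  Series u = Series (fun n => u (2*n)%nat) + Series (fun n => u (S (2*n))).
Proof.
  intros Hu He Ho.
  assert (E : forall N, ps u (2*N) = ps (fun n => u (2*n)%nat) N + ps (fun n => u (S (2*n))) N).
  { induction N. - simpl. ring.
    - replace (2 * S N)%nat with (S (S (2*N))) by lia. cbn [ps]. rewrite IHN. ring. }
  assert (L1 : is_lim_seq (fun N => ps u (2*N)) (Series u)).
  { apply (is_lim_seq_subseq (ps u) _ (fun N => 2*N)%nat).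
    - apply eventually_subseq. intro n. lia.
    - apply ps_lim; auto. }
  assert (L2 : is_lim_seq (fun N => ps u (2*N)) (Series (fun n => u (2*n)%nat) + Series (fun n => u (S (2*n))))).
  { apply (is_lim_seq_ext (fun N => ps (fun n => u (2*n)%nat) N + ps (fun n => u (S (2*n))) N)).
    { intro n. symmetry. apply E. }
    apply (is_lim_seq_plus' _ _ _ _ (ps_lim _ He) (ps_lim _ Ho)). }
  apply is_lim_seq_unique in L1. apply is_lim_seq_unique in L2.
  rewrite L1 in L2. injection L2. auto.
Qed.

Lemma inv_sq_le p q : 0 < p -> p <= q -> 1 / q ^ 2 <= 1 / p ^ 2.
Proof.
  intros Hp Hq. unfold Rdiv. rewrite !Rmult_1_l. apply Rinv_le_contravar.
  - apply pow_lt; auto.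
  - apply pow_incr; lra.
Qed.

Definition z2 (n : nat) : R := 1 / (INR n + 1) ^ 2.

Lemma z2_ps N : ps z2 N <= 2 - 2 / (INR N + 1).
Proof.
  induction N.
  - simpl. lra.
  - simpl ps. rewrite S_INR. change (z2 N) with (1 / (INR N + 1) ^ 2).
    assert (Ha : 1 <= INR N + 1) by (generalize (pos_INR N); lra).
    set (a := INR N + 1) in *.
    assert (K : 1 / a ^ 2 <= 2 / a - 2 / (a + 1)).
    { assert (EE : 2 / a - 2 / (a + 1) - 1 / a ^ 2 = (a - 1) / (a ^ 2 * (a + 1))) by (field; lra).
      assert (0 <= (a - 1) / (a ^ 2 * (a + 1))).
        { apply Rdiv_le_0_compat; [lra| apply Rmult_lt_0_compat; [apply pow_lt|]; lra]. }
      lra. }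
    lra.
Qed.

Lemma sin_lb_eq t : sin_lb t = t - t^3/6 + t^5/120 - t^7/5040.
Proof. unfold sin_lb, sin_approx, sin_term. simpl. field. Qed.

Lemma sin_cubic t : 0 <= t <= 2 -> t - t^3/6 <= sin t.
Proof.
  intros Ht. assert (PI4 := PI_4). assert (P32 := PI2_3_2).
  destruct (SIN t) as [H1 _]; try lra.
  rewrite sin_lb_eq in H1.
  assert (0 <= t^5/120 - t^7/5040).
  { assert (t^7 = t^5 * t^2) by ring. assert (0 <= t^5) by (apply pow_le; lra).
    assert (t^2 <= 4) by nra. nra. }
  lra.
Qed.

Lemma sin_lin t : 0 <= t <= 2 -> t / 3 <= sin t.
Proof. intros Ht. assert (H := sin_cubic t Ht). assert (t^3 <= 4 * t) by nra. lra. Qed.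

Lemma sin_04 t : 0 <= t <= 2 -> 2/5 * t <= sin t.
Proof.
  intros Ht. assert (PI4 := PI_4). assert (P32 := PI2_3_2).
  destruct (SIN t) as [H1 _]; try lra.
  rewrite sin_lb_eq in H1.
  assert (E : t - t^3/6 + t^5/120 - t^7/5040 = t * (1 - t^2/6 + (t^2)^2/120 - (t^2)^3/5040)) by field.
  rewrite E in H1.
  assert (Hs : 0 <= t^2 <= 4) by nra.
  set (s := t^2) in *.
  assert (0 <= 3/5 - s/6 + s^2/120 - s^3/5040) by nra.
  nra.
Qed.

Ltac nz := repeat match goal with |- _ /\ _ => split | |- _ <> _ => apply Rgt_not_eq end; try lra.

Lemma div_le_r p q r : 0 < q -> p <= r * q -> p / q <= r.
Proof.
  intros Hq H. apply Rmult_le_reg_r with q; auto. unfold Rdiv.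
  rewrite Rmult_assoc, Rinv_l by lra. lra.
Qed.

Lemma div_le_l p q r : 0 < q -> r * q <= p -> r <= p / q.
Proof.
  intros Hq H. apply Rmult_le_reg_r with q; auto. unfold Rdiv.
  rewrite Rmult_assoc, Rinv_l by lra. lra.
Qed.

Definition Q (x : R) (n : nat) : R := 1 / (x + INR n) ^ 2.
Definition A (x : R) : R := Series (Q x).

Lemma z2_ex : ex_series z2.
Proof.
  apply ex_series_bound with 2.
  - intro n. unfold z2. apply Rlt_le, Rdiv_lt_0_compat; [lra| apply pow_lt; generalize (pos_INR n); lra].
  - intro N. generalize (z2_ps N). assert (0 <= 2 / (INR N + 1)).
    { apply Rlt_le, Rdiv_lt_0_compat; generalize (pos_INR N); lra. }
    lra.
Qed.

Lemma Q_pos x n : 0 < x -> 0 < Q x n.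
Proof. intro Hx. unfold Q. apply Rdiv_lt_0_compat; [lra| apply pow_lt; generalize (pos_INR n); lra]. Qed.

Lemma Q_mono x n m : 0 < x -> (n <= m)%nat -> Q x m <= Q x n.
Proof. intros Hx Hnm. unfold Q. apply inv_sq_le; [generalize (pos_INR n); lra|].
  apply le_INR in Hnm. lra. Qed.

Lemma Q_ex x : 0 < x -> ex_series (Q x).
Proof.
  intro Hx. apply ex_series_incr_1. apply ex_series_cmp with z2; [|exact z2_ex].
  intro n. split; [left; apply Q_pos; auto|]. unfold Q, z2. rewrite S_INR.
  apply inv_sq_le; generalize (pos_INR n); lra.
Qed.

Lemma A_bounds x : 0 < x -> 1 / x ^ 2 <= A x <= 1 / x ^ 2 + Series z2.
Proof.
  intro Hx. unfold A. rewrite Series_incr_1 by (apply Q_ex; auto).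
  replace (Q x 0) with (1 / x ^ 2) by (unfold Q; simpl; f_equal; ring).
  assert (Ht : ex_series (fun k => Q x (S k))) by exact (proj1 (ex_series_incr_1 _) (Q_ex x Hx)).
  assert (0 <= Series (fun k => Q x (S k))).
  { apply (Series_ge_ps _ 0); auto. intro n. left. apply Q_pos; auto. }
  assert (Series (fun k => Q x (S k)) <= Series z2).
  { apply Series_le; [|exact z2_ex]. intro n. split; [left; apply Q_pos; auto|].
    unfold Q, z2. rewrite S_INR. apply inv_sq_le; generalize (pos_INR n); lra. }
  lra.
Qed.

Lemma A_dup x : 0 < x -> A (x / 2) + A ((x + 1) / 2) = 4 * A x.
Proof.
  intro Hx. unfold A.
  rewrite (Series_ext (Q (x / 2)) (fun n => 4 * Q x (2 * n)%nat)).
  2:{ intro n. unfold Q. rewrite mult_INR. simpl (INR 2).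
      generalize (pos_INR n); intro. field; nz. }
  rewrite (Series_ext (Q ((x + 1) / 2)) (fun n => 4 * Q x (S (2 * n)))).
  2:{ intro n. unfold Q. rewrite S_INR, mult_INR. simpl (INR 2).
      generalize (pos_INR n); intro. field; nz. }
  rewrite !Series_scal_l.
  rewrite (Series_even_odd (Q x)).
  - ring.
  - apply Q_ex; auto.
  - apply ex_series_cmp with (Q x); [|apply Q_ex; auto].
    intro n. split; [left; apply Q_pos; auto| apply Q_mono; auto; lia].
  - apply ex_series_cmp with (Q x); [|apply Q_ex; auto].
    intro n. split; [left; apply Q_pos; auto| apply Q_mono; auto; lia].
Qed.

Definition P (x : R) : R := PI ^ 2 / sin (PI * x) ^ 2.

Lemma P_dup x : 0 < x < 1 -> P (x / 2) + P ((x + 1) / 2) = 4 * P x.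
Proof.
  intros Hx. unfold P. assert (HP := PI_RGT_0).
  set (a := PI * x / 2).
  assert (Ha : 0 < a < PI / 2) by (unfold a; split; nra).
  replace (PI * (x / 2)) with a by (unfold a; field).
  replace (PI * ((x + 1) / 2)) with (a + PI / 2) by (unfold a; field).
  replace (PI * x) with (2 * a) by (unfold a; field).
  rewrite sin_plus, sin_PI2, cos_PI2, sin_2a.
  replace (sin a * 0 + cos a * 1) with (cos a) by ring.
  assert (Hs : 0 < sin a) by (apply sin_gt_0; lra).
  assert (Hc : 0 < cos a) by (apply cos_gt_0; lra).
  assert (Hsc := sin2_cos2 a). unfold Rsqr in Hsc.
  replace (PI ^ 2 / sin a ^ 2 + PI ^ 2 / cos a ^ 2)
    with (PI ^ 2 * (sin a * sin a + cos a * cos a) / (sin a ^ 2 * cos a ^ 2))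
    by (field; nz).
  rewrite Hsc. field; nz.
Qed.

Lemma P_sym x : P (1 - x) = P x.
Proof. unfold P. replace (PI * (1 - x)) with (PI - PI * x) by ring. rewrite sin_PI_x. reflexivity. Qed.

Lemma arith100 u a : 0 <= u <= 1/4 -> 0 <= a -> a <= 8 * u / 3 -> a <= 2/3 ->
  1 <= (1 + 100 * u) * (1 - a) ^ 2.
Proof.
  intros Hu Ha1 Ha2 Ha3.
  destruct (Rle_dec a (1/4)).
  - assert ((1 - a)^2 >= 1 - 2 * a) by nra. nra.
  - assert ((1 - a)^2 >= 1/9) by nra. nra.
Qed.

Lemma P_half x : 0 < x <= 1/2 -> 1 / x ^ 2 <= P x <= 1 / x ^ 2 + 100.
Proof.
  intros Hx. unfold P. assert (HP := PI_RGT_0). assert (P4 := PI_4). assert (P32 := PI2_3_2).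
  set (t := PI * x).
  assert (Ht : 0 < t <= 2) by (unfold t; split; nra).
  assert (Hlt : sin t < t) by (apply sin_lt_x; lra).
  assert (Hcub := sin_cubic t ltac:(lra)).
  set (a := t ^ 2 / 6).
  assert (Ha : 0 <= a <= 2/3) by (unfold a; split; nra).
  assert (Hsa : t * (1 - a) <= sin t) by (unfold a; replace (t * (1 - t^2/6)) with (t - t^3/6) by field; lra).
  assert (Hpos : 0 < t * (1 - a)) by nra.
  assert (Hs : 0 < sin t) by lra.
  split.
  - apply div_le_l. { apply pow_lt; lra. }
    replace (1 / x ^ 2 * sin t ^ 2) with ((sin t / x) ^ 2) by (field; lra).
    replace (PI ^ 2) with ((t / x) ^ 2) by (unfold t; field; lra).
    apply pow_incr. split; [apply Rlt_le, Rdiv_lt_0_compat; lra|].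
    unfold Rdiv. apply Rmult_le_compat_r; [apply Rlt_le, Rinv_0_lt_compat; lra| lra].
  - apply div_le_r. { apply pow_lt; lra. }
    apply Rle_trans with ((1 / x ^ 2 + 100) * (t * (1 - a)) ^ 2).
    + replace ((1 / x ^ 2 + 100) * (t * (1 - a)) ^ 2) with (PI ^ 2 * ((1 + 100 * x ^ 2) * (1 - a) ^ 2))
        by (unfold t; field; lra).
      assert (1 <= (1 + 100 * x ^ 2) * (1 - a) ^ 2).
      { apply arith100; try lra. - split; nra. - unfold a, t. assert (PI^2 <= 16) by nra. nra. }
      nra.
    + apply Rmult_le_compat_l; [assert (0 < 1 / x^2) by (apply Rdiv_lt_0_compat; [lra| apply pow_lt; lra]); lra|].
      apply pow_incr. lra.
Qed.

Definition D (x : R) : R := A x + A (1 - x) - P x.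

Lemma D_dup x : 0 < x < 1 -> D (x / 2) + D ((x + 1) / 2) = 4 * D x.
Proof.
  intros Hx. unfold D.
  assert (E1 := A_dup x ltac:(lra)). assert (E2 := A_dup (1 - x) ltac:(lra)).
  assert (E3 := P_dup x Hx).
  replace (1 - x / 2) with (((1 - x) + 1) / 2) by field.
  replace (1 - (x + 1) / 2) with ((1 - x) / 2) by field.
  lra.
Qed.

Lemma D_sym x : D (1 - x) = D x.
Proof. unfold D. rewrite P_sym. replace (1 - (1 - x)) with x by ring. ring. Qed.

Definition CD := 2 * Series z2 + 104.

Lemma z2_nonneg : 0 <= Series z2.
Proof. apply (Series_ge_ps _ 0). - intro n. unfold z2. apply Rlt_le, Rdiv_lt_0_compat; [lra| apply pow_lt; generalize (pos_INR n); lra].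
  - exact z2_ex. Qed.

Lemma D_bound_half x : 0 < x <= 1/2 -> Rabs (D x) <= CD.
Proof.
  intros Hx. unfold D, CD.
  assert (B1 := A_bounds x ltac:(lra)). assert (B2 := A_bounds (1 - x) ltac:(lra)).
  assert (B3 := P_half x Hx).
  assert (0 <= 1 / (1 - x) ^ 2 <= 4).
  { split. - apply Rlt_le, Rdiv_lt_0_compat; [lra| apply pow_lt; lra].
    - apply div_le_r; [apply pow_lt; lra|]. nra. }
  assert (Z := z2_nonneg).
  apply Rabs_le. lra.
Qed.

Lemma D_bound x : 0 < x < 1 -> Rabs (D x) <= CD.
Proof.
  intros Hx. destruct (Rle_dec x (1/2)).
  - apply D_bound_half. lra.
  - rewrite <- D_sym. apply D_bound_half. lra.
Qed.

Lemma D_iter n : forall x, 0 < x < 1 -> Rabs (D x) <= CD * (1/2) ^ n.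
Proof.
  induction n; intros x Hx.
  - simpl. rewrite Rmult_1_r. apply D_bound; auto.
  - assert (E := D_dup x Hx).
    assert (H1 := IHn (x / 2) ltac:(lra)). assert (H2 := IHn ((x + 1) / 2) ltac:(lra)).
    replace (D x) with ((D (x / 2) + D ((x + 1) / 2)) / 4) by (rewrite E; field).
    unfold Rdiv at 1. rewrite Rabs_mult. rewrite (Rabs_right (/ 4)) by lra.
    assert (T := Rabs_triang (D (x / 2)) (D ((x + 1) / 2))).
    simpl. lra.
Qed.

Lemma D_zero x : 0 < x < 1 -> D x = 0.
Proof.
  intros Hx. destruct (Req_dec (D x) 0) as [|Hne]; auto. exfalso.
  assert (Hpos : 0 < Rabs (D x)) by (apply Rabs_pos_lt; auto).
  assert (HC : 0 < CD).
  { assert (H := D_bound x Hx). lra. }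
  destruct (pow_lt_1_zero (1/2) ltac:(rewrite Rabs_right; lra) (Rabs (D x) / CD) ltac:(apply Rdiv_lt_0_compat; lra)) as [N HN].
  specialize (HN N (le_n N)).
  rewrite Rabs_right in HN by (apply Rle_ge, pow_le; lra).
  assert (H := D_iter N x Hx).
  assert (CD * (1/2)^N < Rabs (D x)).
  { apply Rmult_lt_compat_l with (r := CD) in HN; auto.
    replace (CD * (Rabs (D x) / CD)) with (Rabs (D x)) in HN by (field; lra). lra. }
  lra.
Qed.

Lemma identity x : 0 < x < 1 -> A x + A (1 - x) = PI ^ 2 / sin (PI * x) ^ 2.
Proof. intros Hx. assert (H := D_zero x Hx). unfold D, P in H. lra. Qed.

Definition phi (r w : R) : R := if Req_EM_T w 0 then 0 else Rpower w r.

Lemma Rpower_pos w r : 0 < Rpower w r.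
Proof. unfold Rpower. apply exp_pos. Qed.

Lemma Rpower_split w r : 0 < w -> Rpower w r = Rpower w (r - 1) * w.
Proof.
  intro Hw. rewrite <- (Rpower_1 w) at 3 by auto. rewrite <- Rpower_plus. f_equal. ring.
Qed.

Lemma phi_nonneg r w : 0 <= phi r w.
Proof. unfold phi. destruct (Req_EM_T w 0); [lra| apply Rlt_le, Rpower_pos]. Qed.

Lemma phi_pos r w : w <> 0 -> phi r w = Rpower w r.
Proof. intro H. unfold phi. destruct (Req_EM_T w 0); [contradiction| reflexivity]. Qed.

Lemma phi_le r w : 1 <= r -> 0 <= w <= 1 -> phi r w <= w.
Proof.
  intros Hr Hw. unfold phi. destruct (Req_EM_T w 0); [lra|].
  rewrite Rpower_split by lra.
  assert (Rpower w (r - 1) <= 1).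
  { replace 1 with (Rpower 1 (r - 1)) at 2.
    - apply Rle_Rpower_l; lra.
    - unfold Rpower. rewrite ln_1, Rmult_0_r. apply exp_0. }
  assert (0 < Rpower w (r - 1)) by apply Rpower_pos. nra.
Qed.

Lemma bernoulli t r : 0 < t -> 1 <= r -> 1 + r * (t - 1) <= Rpower t r.
Proof.
  intros Ht Hr. rewrite Rpower_split by auto.
  assert (E1 : 1 + (r - 1) * ln t <= Rpower t (r - 1)) by (unfold Rpower; apply exp_ineq1_le).
  assert (E2 : 1 + ln (/ t) <= / t).
  { rewrite <- (exp_ln (/ t)) at 2 by (apply Rinv_0_lt_compat; auto). apply exp_ineq1_le. }
  rewrite ln_Rinv in E2 by auto.
  assert (E3 : t - 1 <= t * ln t).
  { apply Rmult_le_compat_l with (r := t) in E2; [|lra].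
    rewrite Rinv_r in E2 by lra. nra. }
  nra.
Qed.

Lemma tangent r a b : 1 <= r -> 0 <= a -> 0 < b ->
  phi r b + r * Rpower b (r - 1) * (a - b) <= phi r a.
Proof.
  intros Hr Ha Hb. rewrite (phi_pos r b) by lra.
  assert (Hbp := Rpower_pos b (r - 1)).
  rewrite (Rpower_split b r) by auto.
  unfold phi at 1. destruct (Req_EM_T a 0) as [Ha0|Ha0].
  - subst a. assert (0 < Rpower b (r - 1) * b) by (apply Rmult_lt_0_compat; lra). nra.
  - assert (Hat : 0 < a) by lra.
    assert (B := bernoulli (a / b) r ltac:(apply Rdiv_lt_0_compat; lra) Hr).
    assert (Ea : Rpower a r = Rpower (a / b) r * Rpower b r).
    { rewrite Rpower_mult_distr; [f_equal; field; lra| apply Rdiv_lt_0_compat; lra| lra]. }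
    rewrite Ea, (Rpower_split b r) by auto.
    assert (E : Rpower b (r - 1) * b + r * Rpower b (r - 1) * (a - b)
              = (1 + r * (a / b - 1)) * (Rpower b (r - 1) * b)) by (field; lra).
    rewrite E. apply Rmult_le_compat_r; [nra| exact B].
Qed.

Lemma abel d e N : (forall i, 0 <= d i) -> (forall i, d (S i) <= d i) ->
  (forall n, 0 <= ps e n) -> d N * ps e N <= ps (fun i => d i * e i) N.
Proof.
  intros Hd Hdec He. induction N.
  - simpl. lra.
  - simpl. specialize (Hdec N). specialize (He (S N)). simpl in He.
    assert ((d N - d (S N)) * (ps e N + e N) >= 0) by nra. nra.
Qed.

Lemma karamata r a b N : 1 <= r -> (forall i, 0 <= a i) -> (forall i, 0 < b i) ->
  (forall i, b (S i) <= b i) -> (forall n, ps b n <= ps a n) ->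
  ps (fun i => phi r (b i)) N <= ps (fun i => phi r (a i)) N.
Proof.
  intros Hr Ha Hb Hdec Hps.
  set (d := fun i => r * Rpower (b i) (r - 1)).
  assert (T : forall i, phi r (b i) + d i * (a i - b i) <= phi r (a i)).
  { intro i. unfold d. apply tangent; auto. }
  assert (L : ps (fun i => phi r (b i) + d i * (a i - b i)) N <= ps (fun i => phi r (a i)) N).
  { apply ps_le. exact T. }
  rewrite ps_plus in L.
  assert (A1 : d N * ps (fun i => a i - b i) N <= ps (fun i => d i * (a i - b i)) N).
  { apply abel.
    - intro i. unfold d. assert (0 < Rpower (b i) (r - 1)) by apply Rpower_pos. nra.
    - intro i. unfold d. apply Rmult_le_compat_l; [lra|]. apply Rle_Rpower_l; [lra|].
      split; [apply Hb| apply Hdec].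
    - intro n. replace (ps (fun i => a i - b i) n) with (ps a n + -1 * ps b n).
      + specialize (Hps n). lra.
      + rewrite <- ps_scal, <- ps_plus. apply ps_ext. intro. ring. }
  assert (0 <= d N * ps (fun i => a i - b i) N).
  { apply Rmult_le_pos.
    - unfold d. assert (0 < Rpower (b N) (r - 1)) by apply Rpower_pos. nra.
    - replace (ps (fun i => a i - b i) N) with (ps a N + -1 * ps b N).
      + specialize (Hps N). lra.
      + rewrite <- ps_scal, <- ps_plus. apply ps_ext. intro. ring. }
  lra.
Qed.

Ltac nz2 := repeat match goal with |- _ /\ _ => split | |- _ <> _ => apply Rgt_not_eq end; try nra.

Lemma arithT j y S : 3/2 <= j -> 0 <= y <= 1/2 -> 144/100 * y^2 <= S -> S <= 1 ->
  (1 - S) * (1 / (j - y)^2 + 1 / (j + y)^2) <= 2 / j^2.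
Proof.
  intros Hj Hy HS1 HS2.
  assert (Hjy : 0 < j - y) by lra.
  replace ((1 - S) * (1 / (j - y)^2 + 1 / (j + y)^2))
    with (((1 - S) * 2 * (j^2 + y^2)) / ((j^2 - y^2)^2)) by (field; nz2).
  apply div_le_r. { apply pow_lt. nra. }
  replace (2 / j^2 * (j^2 - y^2)^2) with ((2 * (j^2 - y^2)^2) / j^2) by (field; nz2).
  apply div_le_l. { apply pow_lt. lra. }
  assert (K1 : S * (j^2 + y^2) * j^2 >= 144/100 * y^2 * j^2 * j^2).
  { assert (0 <= (j^2 + y^2) * j^2) by nra.
    assert (144/100 * y^2 * ((j^2 + y^2) * j^2) <= S * ((j^2 + y^2) * j^2)) by (apply Rmult_le_compat_r; lra).
    assert (y^2 * j^2 * j^2 <= y^2 * (j^2 + y^2) * j^2) by (assert (0 <= y^2*j^2) by nra; nra).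
    nra. }
  assert (K2 : 144/100 * y^2 * j^2 * j^2 >= 3 * y^2 * j^2).
  { assert (j^2 >= 9/4) by nra. assert (0 <= y^2 * j^2) by nra. nra. }
  assert (K3 : 0 <= y^4) by nra.
  nra.
Qed.

Lemma sin_sq_shift y k : sin (PI * (y + INR k)) ^ 2 = sin (PI * y) ^ 2.
Proof.
  induction k.
  - simpl. rewrite Rplus_0_r. reflexivity.
  - rewrite S_INR. replace (PI * (y + (INR k + 1))) with (PI * (y + INR k) + PI) by ring.
    rewrite neg_sin. rewrite <- IHk. ring.
Qed.

Lemma sinc_sq y : y <> 0 -> sinc y ^ 2 = sin (PI * y) ^ 2 / PI ^ 2 * (1 / y ^ 2).
Proof.
  intro H. unfold sinc. destruct (Req_EM_T y 0); [contradiction|].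
  assert (PI_neq0 := PI_neq0). field. auto.
Qed.

Lemma term_phi r y : term r y = phi r (sinc y ^ 2).
Proof.
  unfold term, rpow. destruct (Req_EM_T (Rabs (sinc y)) 0) as [H|H].
  - assert (H0 : sinc y ^ 2 = 0) by (rewrite <- pow2_abs, H; ring).
    rewrite H0. unfold phi. destruct (Req_EM_T 0 0); [reflexivity| contradiction].
  - assert (Hp : 0 < Rabs (sinc y)) by (assert (T := Rabs_pos (sinc y)); lra).
    rewrite phi_pos.
    + unfold Rpower. f_equal. rewrite <- pow2_abs. rewrite ln_pow by auto. simpl (INR 2). ring.
    + rewrite <- pow2_abs. apply pow_nonzero. auto.
Qed.

Definition su (x : R) : R := sin (PI * x) ^ 2 / PI ^ 2.

Lemma W_u x k : 0 < x -> sinc (x + INR k) ^ 2 = su x * Q x k.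
Proof.
  intro Hx. rewrite sinc_sq by (generalize (pos_INR k); lra).
  rewrite sin_sq_shift. unfold su, Q. reflexivity.
Qed.

Lemma W_v x k : x < 1 -> sinc (x - INR (S k)) ^ 2 = su x * Q (1 - x) k.
Proof.
  intro Hx. rewrite sinc_sq by (rewrite S_INR; generalize (pos_INR k); lra).
  rewrite <- (sin_sq_shift (x - INR (S k)) (S k)).
  replace (x - INR (S k) + INR (S k)) with x by ring.
  unfold su, Q. rewrite S_INR. f_equal. f_equal. ring.
Qed.

Lemma su_pos x : 0 < x < 1 -> 0 < su x.
Proof.
  intros Hx. unfold su. assert (HP := PI_RGT_0).
  assert (0 < sin (PI * x)) by (apply sin_gt_0; nra).
  apply Rdiv_lt_0_compat; apply pow_lt; lra.
Qed.

Lemma su_le x : su x <= 1 / PI ^ 2.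
Proof.
  unfold su. assert (HP := PI_RGT_0). unfold Rdiv. apply Rmult_le_compat_r.
  - apply Rlt_le, Rinv_0_lt_compat, pow_lt; lra.
  - assert (T := sin2_cos2 (PI * x)). unfold Rsqr in T. assert (0 <= cos (PI * x) * cos (PI * x)) by nra. nra.
Qed.

Lemma su_half : su (1/2) = 1 / PI ^ 2.
Proof. unfold su. replace (PI * (1/2)) with (PI / 2) by field. rewrite sin_PI2. field. apply PI_neq0. Qed.

Lemma ex_u x : 0 < x < 1 -> ex_series (fun k => su x * Q x k).
Proof. intros Hx. apply (ex_series_scal_l (su x) (Q x)). apply Q_ex. lra. Qed.

Lemma ex_v x : 0 < x < 1 -> ex_series (fun k => su x * Q (1 - x) k).
Proof. intros Hx. apply (ex_series_scal_l (su x) (Q (1 - x))). apply Q_ex. lra. Qed.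

Lemma uv_sum x : 0 < x < 1 ->
  Series (fun k => su x * Q x k) + Series (fun k => su x * Q (1 - x) k) = 1.
Proof.
  intros Hx. rewrite !Series_scal_l. rewrite <- Rmult_plus_distr_l.
  change (su x * (A x + A (1 - x)) = 1). rewrite identity by auto.
  unfold su. assert (HP := PI_RGT_0).
  assert (0 < sin (PI * x)) by (apply sin_gt_0; nra).
  field. split; apply Rgt_not_eq; lra.
Qed.

Definition inter (f g : nat -> R) (i : nat) : R :=
  if Nat.even i then f (Nat.div2 i) else g (Nat.div2 i).

Lemma inter_even f g N : inter f g (2 * N) = f N.
Proof. unfold inter. rewrite Nat.even_mul, Nat.div2_double. reflexivity. Qed.

Lemma inter_odd f g N : inter f g (S (2 * N)) = g N.
Proof. unfold inter. rewrite Nat.even_succ, Nat.odd_mul, Nat.div2_succ_double. reflexivity. Qed.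

Lemma ps_inter f g N : ps (inter f g) (2 * N) = ps f N + ps g N.
Proof.
  induction N.
  - simpl. ring.
  - replace (2 * S N)%nat with (S (S (2 * N))) by lia. cbn [ps].
    rewrite IHN, inter_even, inter_odd. ring.
Qed.

Lemma phi_inter r f g i : phi r (inter f g i) = inter (fun k => phi r (f k)) (fun k => phi r (g k)) i.
Proof. unfold inter. destruct (Nat.even i); reflexivity. Qed.

Lemma inter_same c i : inter c c i = c (Nat.div2 i).
Proof. unfold inter. destruct (Nat.even i); reflexivity. Qed.

Lemma inter_nonneg f g i : (forall k, 0 <= f k) -> (forall k, 0 <= g k) -> 0 <= inter f g i.
Proof. intros. unfold inter. destruct (Nat.even i); auto. Qed.

Lemma main_half r x : 1 <= r -> 0 < x <= 1/2 -> f_r r (1/2) <= f_r r x.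
Proof.
  intros Hr Hx.
  assert (HP := PI_RGT_0). assert (P4 := PI_4). assert (P32 := PI2_3_2).
  set (u := fun k => su x * Q x k).
  set (v := fun k => su x * Q (1 - x) k).
  set (c := fun k => su (1/2) * Q (1/2) k).
  assert (Ex1 : f_r r x = Series (fun k => phi r (u k)) + Series (fun k => phi r (v k))).
  { unfold f_r. f_equal; apply Series_ext; intro n; rewrite term_phi.
    - rewrite W_u by lra. reflexivity.
    - rewrite W_v by lra. reflexivity. }
  assert (Ex2 : f_r r (1/2) = Series (fun k => phi r (c k)) + Series (fun k => phi r (c k))).
  { unfold f_r. f_equal; apply Series_ext; intro n; rewrite term_phi.
    - rewrite W_u by lra. reflexivity.
    - rewrite W_v by lra. replace (1 - 1/2) with (1/2) by field. reflexivity. }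
  assert (Hsu : 0 < su x <= 1 / PI^2) by (split; [apply su_pos; lra| apply su_le]).
  assert (Hc0 : forall k, 0 < c k).
  { intro k; unfold c; apply Rmult_lt_0_compat; [apply su_pos; lra| apply Q_pos; lra]. }
  assert (Hu0 : forall k, 0 <= u k).
  { intro k; unfold u; apply Rlt_le, Rmult_lt_0_compat; [lra| apply Q_pos; lra]. }
  assert (Hv0 : forall k, 0 <= v k).
  { intro k; unfold v; apply Rlt_le, Rmult_lt_0_compat; [lra| apply Q_pos; lra]. }
  assert (Hcmono : forall n m, (n <= m)%nat -> c m <= c n).
  { intros n m Hnm; unfold c; apply Rmult_le_compat_l; [apply Rlt_le, su_pos; lra| apply Q_mono; auto; lra]. }
  assert (Hvc : forall k, v k <= c k).
  { intro k. unfold v, c. rewrite su_half. apply Rmult_le_compat; [lra| left; apply Q_pos; lra| lra| ].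
    unfold Q. apply inv_sq_le; generalize (pos_INR k); lra. }
  assert (Huvc : forall k, (1 <= k)%nat -> u k + v k <= c k + c k).
  { intros k Hk. unfold u, v, c. rewrite su_half.
    set (y := 1/2 - x). set (j := 1/2 + INR k). set (SS := sin (PI * y) ^ 2).
    assert (Hj : 3/2 <= j) by (unfold j; apply le_INR in Hk; simpl in Hk; lra).
    assert (Hy : 0 <= y <= 1/2) by (unfold y; lra).
    assert (Es : su x = (1 - SS) / PI^2).
    { unfold su, SS, y. replace (PI * (1/2 - x)) with (PI/2 - PI * x) by field. rewrite sin_shift.
      assert (T := sin2_cos2 (PI * x)). unfold Rsqr in T.
      assert (T' : sin (PI * x) ^ 2 + cos (PI * x) ^ 2 = 1) by (rewrite <- T; ring).
      f_equal. lra. }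
    assert (HS1 : SS <= 1).
    { unfold SS. assert (T := sin2_cos2 (PI * y)). unfold Rsqr in T.
      assert (0 <= cos (PI * y) * cos (PI * y)) by nra. simpl. lra. }
    assert (HS2 : 144/100 * y^2 <= SS).
    { unfold SS. assert (L := sin_04 (PI * y) ltac:(split; nra)).
      assert (6/5 * y <= sin (PI * y)) by nra.
      assert (0 <= 6/5 * y) by lra.
      assert ((6/5 * y)^2 <= sin (PI * y) ^ 2) by (apply pow_incr; lra). nra. }
    assert (AT := arithT j y SS Hj Hy HS2 HS1).
    replace (Q x k) with (1 / (j - y)^2) by (unfold Q, j, y; f_equal; f_equal; lra).
    replace (Q (1 - x) k) with (1 / (j + y)^2) by (unfold Q, j, y; f_equal; f_equal; lra).
    replace (Q (1/2) k) with (1 / j^2) by (unfold Q, j; f_equal; f_equal; lra).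
    rewrite Es.
    replace ((1 - SS) / PI ^ 2 * (1 / (j - y) ^ 2) + (1 - SS) / PI ^ 2 * (1 / (j + y) ^ 2))
      with (1 / PI^2 * ((1 - SS) * (1 / (j - y) ^ 2 + 1 / (j + y) ^ 2))) by (field; nz2).
    replace (1 / PI ^ 2 * (1 / j ^ 2) + 1 / PI ^ 2 * (1 / j ^ 2)) with (1 / PI^2 * (2 / j^2)) by (field; nz2).
    apply Rmult_le_compat_l; auto.
    apply Rlt_le, Rdiv_lt_0_compat; [lra| apply pow_lt; lra]. }
  assert (Hu1 : forall k, u k <= 1).
  { intro k. apply Rle_trans with (u 0%nat). { unfold u. apply Rmult_le_compat_l; [lra| apply Q_mono; [lra| lia]]. }
    unfold u, su, Q. simpl (INR 0). rewrite Rplus_0_r.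
    assert (Hs : 0 < sin (PI * x)) by (apply sin_gt_0; nra).
    assert (Hl : sin (PI * x) < PI * x) by (apply sin_lt_x; nra).
    replace (sin (PI * x) ^ 2 / PI ^ 2 * (1 / x ^ 2)) with (sin (PI * x) ^ 2 / (PI * x) ^ 2) by (field; nz2).
    apply div_le_r; [apply pow_lt; nra|]. rewrite Rmult_1_l. apply pow_incr. lra. }
  assert (Hc1 : forall k, c k <= 1).
  { intro k. apply Rle_trans with (c 0%nat); [apply Hcmono; lia|].
    unfold c, Q. rewrite su_half. simpl (INR 0). rewrite Rplus_0_r.
    replace (1 / PI ^ 2 * (1 / (1/2) ^ 2)) with (4 / PI^2) by (field; nz2).
    apply div_le_r; [apply pow_lt; lra|]. nra. }
  assert (Hv1 : forall k, v k <= 1) by (intro k; specialize (Hvc k); specialize (Hc1 k); lra).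
  assert (Exu : ex_series u) by (apply ex_u; lra).
  assert (Exv : ex_series v) by (apply ex_v; lra).
  assert (Exc : ex_series c) by (apply ex_u; lra).
  assert (Suv : Series u + Series v = 1) by (apply uv_sum; lra).
  assert (Scc : Series c + Series c = 1).
  { assert (H := uv_sum (1/2) ltac:(lra)). replace (1 - 1/2) with (1/2) in H by field. exact H. }
  set (F := fun M => ps u M + ps v M - (ps c M + ps c M)).
  assert (FL : is_lim_seq F 0).
  { assert (L := is_lim_seq_minus' _ _ _ _ (is_lim_seq_plus' _ _ _ _ (ps_lim u Exu) (ps_lim v Exv))
                                      (is_lim_seq_plus' _ _ _ _ (ps_lim c Exc) (ps_lim c Exc))).
    rewrite Suv, Scc in L. replace (1 - 1) with 0 in L by ring. exact L. }
  assert (Fdec : forall N m, (1 <= N)%nat -> F (m + N)%nat <= F N).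
  { intros N m HN. induction m; [simpl; lra|].
    replace (S m + N)%nat with (S (m + N)) by lia.
    assert (K := Huvc (m + N)%nat ltac:(lia)).
    unfold F in *. cbn [ps]. lra. }
  assert (Fpos : forall N, (1 <= N)%nat -> 0 <= F N).
  { intros N HN.
    assert (L1 : is_lim_seq (fun m => F (m + N)%nat) 0) by (apply (is_lim_seq_incr_n F N); exact FL).
    assert (L := is_lim_seq_le (fun m => F (m + N)%nat) (fun _ => F N) 0 (F N)
                   (fun m => Fdec N m HN) L1 (is_lim_seq_const _)).
    simpl in L. exact L. }
  assert (Hps : forall n, ps (inter c c) n <= ps (inter u v) n).
  { intro n. destruct (Nat.Even_or_Odd n) as [[N HN]|[N HN]]; subst n.
    - rewrite !ps_inter. destruct N.
      + simpl. lra.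
      + assert (K := Fpos (S N) ltac:(lia)). unfold F in K. lra.
    - replace (2 * N + 1)%nat with (S (2 * N)) by lia. cbn [ps].
      rewrite !ps_inter, !inter_even.
      assert (K := Fpos (S N) ltac:(lia)). unfold F in K. cbn [ps] in K.
      specialize (Hvc N). lra. }
  assert (Kar : forall N, ps (fun k => phi r (c k)) N + ps (fun k => phi r (c k)) N
                      <= ps (fun k => phi r (u k)) N + ps (fun k => phi r (v k)) N).
  { intro N.
    assert (K := karamata r (inter u v) (inter c c) (2 * N) Hr
                   (fun i => inter_nonneg u v i Hu0 Hv0)
                   (fun i => ltac:(rewrite inter_same; apply Hc0))
                   (fun i => ltac:(rewrite !inter_same; apply Hcmono; apply Nat.div2_le_mono; lia))
                   Hps).
    rewrite (ps_ext _ (inter (fun k => phi r (c k)) (fun k => phi r (c k)))) in K by (intro; apply phi_inter).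
    rewrite (ps_ext (fun i => phi r (inter u v i)) (inter (fun k => phi r (u k)) (fun k => phi r (v k)))) in K by (intro; apply phi_inter).
    rewrite !ps_inter in K. exact K. }
  assert (Exfu : ex_series (fun k => phi r (u k))).
  { apply ex_series_cmp with u; auto. intro n. split; [apply phi_nonneg| apply phi_le; auto]. }
  assert (Exfv : ex_series (fun k => phi r (v k))).
  { apply ex_series_cmp with v; auto. intro n. split; [apply phi_nonneg| apply phi_le; auto]. }
  assert (Exfc : ex_series (fun k => phi r (c k))).
  { apply ex_series_cmp with c; auto. intro n. split; [apply phi_nonneg| apply phi_le; auto]. split; [left; auto| auto]. }
  assert (L := is_lim_seq_le _ _ _ _ Kar
                 (is_lim_seq_plus' _ _ _ _ (ps_lim _ Exfc) (ps_lim _ Exfc))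
                 (is_lim_seq_plus' _ _ _ _ (ps_lim _ Exfu) (ps_lim _ Exfv))).
  simpl in L. rewrite Ex1, Ex2. exact L.
Qed.

Lemma sinc_even y : sinc (- y) = sinc y.
Proof.
  unfold sinc. destruct (Req_EM_T (- y) 0), (Req_EM_T y 0); try reflexivity; try lra.
  replace (PI * - y) with (- (PI * y)) by ring. rewrite sin_neg.
  assert (PI_neq0 := PI_neq0). field. split; auto.
Qed.

Lemma term_even r y : term r (- y) = term r y.
Proof. unfold term. rewrite sinc_even. reflexivity. Qed.

Lemma f_sym r x : f_r r (1 - x) = f_r r x.
Proof.
  unfold f_r. rewrite (Rplus_comm (Series _) (Series _)). f_equal; apply Series_ext; intro n.
  - replace (1 - x - INR (S n)) with (- (x + INR n)) by (rewrite S_INR; ring). apply term_even.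
  - replace (1 - x + INR n) with (- (x - INR (S n))) by (rewrite S_INR; ring). apply term_even.
Qed.

Lemma term_zero r y : y <> 0 -> sin (PI * y) ^ 2 = 0 -> term r y = 0.
Proof.
  intros Hy Hs. assert (Hs0 : sin (PI * y) = 0) by (apply Rsqr_0_uniq; rewrite Rsqr_pow2; exact Hs).
  unfold term, rpow, sinc. destruct (Req_EM_T y 0); [contradiction|].
  rewrite Hs0. unfold Rdiv. rewrite Rmult_0_l, Rabs_R0.
  destruct (Req_EM_T 0 0); [reflexivity| contradiction].
Qed.

Lemma term_0 r : term r 0 = 1.
Proof.
  unfold term, rpow, sinc. destruct (Req_EM_T 0 0); [|contradiction].
  rewrite Rabs_R1. destruct (Req_EM_T 1 0); [lra|].
  unfold Rpower. rewrite ln_1, Rmult_0_r. apply exp_0.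
Qed.

Lemma Series_zero : Series (fun _ : nat => 0) = 0.
Proof.
  rewrite (Series_ext _ (fun _ : nat => 0 * 0)) by (intro; ring).
  rewrite Series_scal_l. ring.
Qed.

Lemma f_zero r : f_r r 0 = 1.
Proof.
  unfold f_r.
  assert (T1 : forall n, term r (0 + INR (S n)) = 0).
  { intro n. apply term_zero.
    - rewrite S_INR. generalize (pos_INR n). lra.
    - rewrite sin_sq_shift. rewrite Rmult_0_r, sin_0. ring. }
  assert (T2 : forall n, term r (0 - INR (S n)) = 0).
  { intro n. apply term_zero.
    - rewrite S_INR. generalize (pos_INR n). lra.
    - rewrite <- (sin_sq_shift (0 - INR (S n)) (S n)).
      replace (0 - INR (S n) + INR (S n)) with 0 by ring. rewrite Rmult_0_r, sin_0. ring. }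
  assert (Ex : ex_series (fun n => term r (0 + INR n))).
  { apply ex_series_incr_1. apply ex_series_cmp with z2; [|exact z2_ex].
    intro n. rewrite T1. split; [lra|]. unfold z2. apply Rlt_le, Rdiv_lt_0_compat; [lra| apply pow_lt; generalize (pos_INR n); lra]. }
  rewrite Series_incr_1 by exact Ex.
  rewrite (Series_ext _ (fun _ => 0)) by exact T1.
  rewrite (Series_ext (fun n => term r (0 - INR (S n))) (fun _ => 0)) by exact T2.
  rewrite Series_zero. replace (0 + INR 0) with 0 by (simpl; ring). rewrite term_0. ring.
Qed.

Lemma f_half_le1 r : 1 <= r -> f_r r (1/2) <= 1.
Proof.
  intros Hr. assert (HP := PI_RGT_0). assert (P32 := PI2_3_2).
  set (c := fun k => su (1/2) * Q (1/2) k).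
  assert (Ex2 : f_r r (1/2) = Series (fun k => phi r (c k)) + Series (fun k => phi r (c k))).
  { unfold f_r. f_equal; apply Series_ext; intro n; rewrite term_phi.
    - rewrite W_u by lra. reflexivity.
    - rewrite W_v by lra. replace (1 - 1/2) with (1/2) by field. reflexivity. }
  assert (Hc0 : forall k, 0 < c k).
  { intro k; unfold c; apply Rmult_lt_0_compat; [apply su_pos; lra| apply Q_pos; lra]. }
  assert (Hc1 : forall k, c k <= 1).
  { intro k. apply Rle_trans with (c 0%nat).
    { unfold c; apply Rmult_le_compat_l; [apply Rlt_le, su_pos; lra| apply Q_mono; [lra| lia]]. }
    unfold c, Q. rewrite su_half. simpl (INR 0). rewrite Rplus_0_r.
    replace (1 / PI ^ 2 * (1 / (1/2) ^ 2)) with (4 / PI^2) by (field; nz2).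
    apply div_le_r; [apply pow_lt; lra|]. nra. }
  assert (Exc : ex_series c) by (apply ex_u; lra).
  assert (Scc : Series c + Series c = 1).
  { assert (H := uv_sum (1/2) ltac:(lra)). replace (1 - 1/2) with (1/2) in H by field. exact H. }
  assert (Hle : Series (fun k => phi r (c k)) <= Series c).
  { apply Series_le; auto. intro n. split; [apply phi_nonneg| apply phi_le; auto]. split; [left; auto| auto]. }
  lra.
Qed.

Theorem proposition1 (r : R) (hr : 1 <= r) (x : R) (hx0 : 0 <= x) (hx1 : x <= 1) :
  f_r r (1 / 2) <= f_r r x.
Proof.
  destruct (Rle_dec x (1/2)) as [Hle|Hgt].
  - destruct (Req_dec x 0) as [H0|H0].
    + subst x. rewrite f_zero. apply f_half_le1; auto.
    + apply main_half; auto. lra.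
  - rewrite <- (f_sym r x). destruct (Req_dec x 1) as [H1|H1].
    + subst x. replace (1 - 1) with 0 by ring. rewrite f_zero. apply f_half_le1; auto.
    + apply main_half; auto. lra.
Qed.
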